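(* Let $M=\{D_1,\dots,D_m\}$, $m\ge2$, be a 2-disk system consisting of pairwise distinct disks. Then $\bigcap_{k=1}^m D_k\neq\emptyset$ if and only if there exist indices $i\ne j$ with $D_i\cap D_j\ne\emptyset$ such that the point $d_{ij}$ satisfies $d_{ij}\in D_k$ for all $1\le k\le m$.
   Context: A 2-disk system is a finite collection of closed disks $D_i=D(c_i;r_i)=\{x\in\mathbb R^2:\|x-c_i\|\le r_i\}$ with $r_i>0$; $\partial D_i$ denotes the boundary circle $\{x:\|x-c_i\|=r_i\}$. Definition of $d_{ij}$: for $i\neq j$ with $D_i\cap D_j\ne\emptyset$, write $c_j-c_i=(a,b)$ and $\mathbf n_{ij}=(-b,a)$. (1) If $\partial D_i\cap\partial D_j\ne\emptyset$, $d_{ij}$ is the unique point of $\partial D_i\cap\partial D_j$ with $\langle d_{ij}-c_i,\mathbf n_{ij}\rangle\ge0$. (2) If $\partial D_i\cap\partial D_j=\emptyset$ (so $r_i\ne r_j$ and one disk lies in the interior of the other), let $\lambda=\|c_i-c_j\|/|r_i-r_j|$; then $d_{ij}$ is the unique point of $\partial D(c_i;\lambda r_i)\cap\partial D(c_j;\lambda r_j)$ (when $c_i=c_j$ this means $d_{ij}=c_i$). *)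

(* Defs.v *)
From Stdlib Require Import Reals.
Open Scope R_scope.

Definition pt : Type := (R * R)%type.

Definition psub (p q : pt) : pt := (fst p - fst q, snd p - snd q).
Definition inner (p q : pt) : R := fst p * fst q + snd p * snd q.
Definition norm (p : pt) : R := sqrt (fst p ^ 2 + snd p ^ 2).

Record disk : Type := mkDisk { center : pt ; radius : R }.

Definition in_disk (x : pt) (D : disk) : Prop :=
  norm (psub x (center D)) <= radius D.

Definition on_circle (x c : pt) (r : R) : Prop := norm (psub x c) = r.

Definition boundaries_meet (Di Dj : disk) : Prop :=
  exists x, on_circle x (center Di) (radius Di) /\ on_circle x (center Dj) (radius Dj).

(* d is the point d_ij (for D_i, D_j with nonempty intersection), following the
   paper's definition: the point is characterised by the defining property
   (which determines it uniquely for distinct disks). *)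
Definition is_dij (Di Dj : disk) (d : pt) : Prop :=
  let ci := center Di in let cj := center Dj in
  let ri := radius Di in let rj := radius Dj in
  let ab := psub cj ci in
  let n := (- snd ab, fst ab) in
  (boundaries_meet Di Dj /\
     on_circle d ci ri /\ on_circle d cj rj /\ 0 <= inner (psub d ci) n)
  \/
  (~ boundaries_meet Di Dj /\
     let lam := norm (psub ci cj) / Rabs (ri - rj) in
     on_circle d ci (lam * ri) /\ on_circle d cj (lam * rj)).

(* Main.v *)
Require Import Defs.
From Stdlib Require Import Reals Lra Psatz Classical Arith Lia.
Open Scope R_scope.

Definition mymin (a b : R) : R := (a + b - Rabs (a - b)) / 2.
Lemma mymin_l a b : mymin a b <= a.
Proof. unfold mymin, Rabs; destruct Rcase_abs; lra. Qed.
Lemma mymin_r a b : mymin a b <= b.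
Proof. unfold mymin, Rabs; destruct Rcase_abs; lra. Qed.
Lemma mymin_or a b : mymin a b = a \/ mymin a b = b.
Proof. unfold mymin, Rabs; destruct Rcase_abs; lra. Qed.

Fixpoint mn (F : nat -> R -> R) (n : nat) : R -> R :=
  match n with
  | O => F O
  | S n' => fun x => mymin (mn F n' x) (F (S n') x)
  end.

Lemma mn_le F n x l : (l <= n)%nat -> mn F n x <= F l x.
Proof.
  induction n; intros H; simpl.
  - assert (l = 0%nat) by lia; subst; lra.
  - destruct (Nat.eq_dec l (S n)) as [->|Hne].
    + apply mymin_r.
    + eapply Rle_trans; [apply mymin_l| apply IHn; lia].
Qed.

Lemma mn_ex F n x : exists l, (l <= n)%nat /\ mn F n x = F l x.
Proof.
  induction n; simpl.
  - exists 0%nat; split; [lia|reflexivity].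
  - destruct (mymin_or (mn F n x) (F (S n) x)) as [H|H].
    + destruct IHn as [l [Hl Hl2]]. exists l; split; [lia|congruence].
    + exists (S n); split; [lia|exact H].
Qed.

Lemma cont_mymin f g : continuity f -> continuity g -> continuity (fun x => mymin (f x) (g x)).
Proof.
  intros Hf Hg. unfold mymin.
  assert (H : continuity (fun x => Rabs (f x - g x))).
  { change (continuity (comp Rabs (fun x => f x - g x))).
    apply continuity_comp; [|apply Rcontinuity_abs].
    apply (continuity_minus f g); auto. }
  intros x. unfold continuity in *.
  apply (continuity_pt_div (fun x => f x + g x - Rabs (f x - g x)) (fun _ => 2)).
  - apply (continuity_pt_minus (fun x => f x + g x) (fun x => Rabs (f x - g x))); auto.
    apply (continuity_pt_plus f g); auto.
  - apply continuity_pt_const; intros a b; reflexivity.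
  - lra.
Qed.

Lemma mn_cont F n : (forall l, continuity (F l)) -> continuity (mn F n).
Proof.
  intros H; induction n; simpl; auto.
  apply cont_mymin; auto.
Qed.

Lemma angle_ex a b : a * a + b * b = 1 -> exists t, cos t = a /\ sin t = b.
Proof.
  intros H.
  assert (Ha : -1 <= a <= 1) by nra.
  destruct (Rle_or_lt 0 b) as [Hb|Hb].
  - exists (acos a). rewrite cos_acos, sin_acos by lra. split; auto.
    replace (1 - a²) with (b ^ 2) by (unfold Rsqr; nra). apply sqrt_pow2; lra.
  - exists (- acos a). rewrite cos_neg, sin_neg, cos_acos, sin_acos by lra. split; auto.
    replace (1 - a²) with ((-b) ^ 2) by (unfold Rsqr; nra). rewrite sqrt_pow2; lra.
Qed.

Lemma cs_bound e1 e2 d1 d2 rk dl : 0 <= rk -> 0 <= dl ->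
  e1*e1 + e2*e2 <= rk*rk -> d1*d1+d2*d2 = dl*dl -> e1*d1 + e2*d2 <= rk*dl.
Proof.
  intros H0 H1 H2 H3.
  assert (HL : (e1*d1+e2*d2)*(e1*d1+e2*d2) <= (e1*e1+e2*e2)*(d1*d1+d2*d2)).
  { assert (E: (e1*e1+e2*e2)*(d1*d1+d2*d2) - (e1*d1+e2*d2)*(e1*d1+e2*d2) = (e1*d2-e2*d1)*(e1*d2-e2*d1)) by ring.
    assert (0 <= (e1*d2-e2*d1)*(e1*d2-e2*d1)) by apply Rle_0_sqr. lra. }
  assert (HM : (e1*e1+e2*e2)*(d1*d1+d2*d2) <= (rk*dl)*(rk*dl)).
  { rewrite H3. replace ((rk*dl)*(rk*dl)) with ((rk*rk)*(dl*dl)) by ring.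
    apply Rmult_le_compat_r; nra. }
  assert (0 <= rk*dl) by nra.
  destruct (Rle_or_lt (e1*d1+e2*d2) (rk*dl)) as [?|Hc]; auto.
  assert ((rk*dl)*(rk*dl) < (e1*d1+e2*d2)*(e1*d1+e2*d2)).
  { apply Rle_lt_trans with ((rk*dl)*(e1*d1+e2*d2)); [apply Rmult_le_compat_l|apply Rmult_lt_compat_r]; lra. }
  lra.
Qed.

Lemma contain ck1 ck2 rk cl1 cl2 rl : 0 < rk -> 0 < rl ->
  (forall t, (ck1 + rk*cos t - cl1)*(ck1 + rk*cos t - cl1) + (ck2 + rk*sin t - cl2)*(ck2 + rk*sin t - cl2) <= rl*rl) ->
  forall y1 y2, (y1-ck1)*(y1-ck1)+(y2-ck2)*(y2-ck2) <= rk*rk ->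
  (y1-cl1)*(y1-cl1)+(y2-cl2)*(y2-cl2) <= rl*rl.
Proof.
  intros Hk Hl H y1 y2 Hy.
  set (d1 := ck1 - cl1). set (d2 := ck2 - cl2).
  set (N := d1*d1+d2*d2).
  assert (HN : 0 <= N) by (unfold N; nra).
  set (dl := sqrt N).
  assert (Hdl : 0 <= dl) by apply sqrt_pos.
  assert (Hdl2 : dl * dl = N) by (apply sqrt_sqrt; auto).
  assert (Hb : dl + rk <= rl).
  { destruct (Req_dec N 0) as [HN0|HN0].
    - assert (dl = 0) by (unfold dl; rewrite HN0; apply sqrt_0).
      assert (d1 = 0) by (unfold N in HN0; nra).
      assert (d2 = 0) by (unfold N in HN0; nra).
      specialize (H 0). rewrite cos_0, sin_0 in H.
      unfold d1, d2 in *.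
      assert ((rk) * (rk) <= rl*rl) by nra. nra.
    - assert (Hdp : 0 < dl) by (unfold dl; apply sqrt_lt_R0; lra).
      destruct (angle_ex (d1/dl) (d2/dl)) as [t [Hc Hs]].
      { replace (d1 / dl * (d1 / dl) + d2 / dl * (d2 / dl)) with (N / (dl*dl)) by (unfold N; field; lra).
        rewrite Hdl2. field. lra. }
      specialize (H t). rewrite Hc, Hs in H.
      replace (ck1 + rk * (d1 / dl) - cl1) with (d1 * ((dl + rk)/dl)) in H by (unfold d1; field; lra).
      replace (ck2 + rk * (d2 / dl) - cl2) with (d2 * ((dl + rk)/dl)) in H by (unfold d2; field; lra).
      replace (d1 * ((dl + rk) / dl) * (d1 * ((dl + rk) / dl)) +
        d2 * ((dl + rk) / dl) * (d2 * ((dl + rk) / dl))) with ((dl+rk)*(dl+rk)) in H.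
      + nra.
      + replace (d1 * ((dl + rk) / dl) * (d1 * ((dl + rk) / dl)) +
          d2 * ((dl + rk) / dl) * (d2 * ((dl + rk) / dl))) with (N * ((dl+rk)*(dl+rk)) / (dl*dl)) by (unfold N; field; lra).
        rewrite <- Hdl2. field. lra. }
  assert (HC := cs_bound (y1-ck1) (y2-ck2) d1 d2 rk dl (Rlt_le _ _ Hk) Hdl Hy (eq_sym Hdl2)).
  replace (y1 - cl1) with ((y1-ck1) + d1) by (unfold d1; ring).
  replace (y2 - cl2) with ((y2-ck2) + d2) by (unfold d2; ring).
  assert (HH: (dl+rk)*(dl+rk) <= rl*rl) by (apply Rmult_le_compat; lra).
  assert (E: (y1 - ck1 + d1) * (y1 - ck1 + d1) + (y2 - ck2 + d2) * (y2 - ck2 + d2)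
     = ((y1-ck1)*(y1-ck1)+(y2-ck2)*(y2-ck2)) + 2*((y1-ck1)*d1+(y2-ck2)*d2) + N) by (unfold N; ring).
  rewrite E. rewrite <- Hdl2. lra.
Qed.
Definition Q (c1 c2 : nat -> R) (y1 y2 : R) (l : nat) :=
  (y1 - c1 l)*(y1 - c1 l) + (y2 - c2 l)*(y2 - c2 l).

Lemma SL (n : nat) (c1 c2 r : nat -> R) :
  (forall l, (l <= n)%nat -> 0 < r l) ->
  (exists x1 x2, forall l, (l <= n)%nat -> Q c1 c2 x1 x2 l <= r l * r l) ->
  (exists k, (k <= n)%nat /\ forall l, (l <= n)%nat -> forall y1 y2,
      Q c1 c2 y1 y2 k <= r k * r k -> Q c1 c2 y1 y2 l <= r l * r l)
  \/
  (exists k l v1 v2, (k <= n)%nat /\ (l <= n)%nat /\ k <> l /\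
     (forall j, (j <= n)%nat -> Q c1 c2 v1 v2 j <= r j * r j) /\
     Q c1 c2 v1 v2 k = r k * r k /\ Q c1 c2 v1 v2 l = r l * r l).
Proof.
  intros Hr [x1 [x2 Hx]].
  set (psi := fun l t => r l * r l - Q c1 c2 (x1 + t) x2 l).
  assert (Hpc : forall l, continuity (psi l)) by (intros l; unfold psi, Q; reg).
  set (T := Rabs (x1 - c1 O) + r O + 1).
  assert (HT : psi O T < 0).
  { unfold psi, Q, T. assert (H0 := Hr O (Nat.le_0_l n)).
    assert (x1 + (Rabs (x1 - c1 O) + r O + 1) - c1 O >= r O + 1).
    { unfold Rabs; destruct Rcase_abs; lra. }
    set (a := x1 + (Rabs (x1 - c1 O) + r O + 1) - c1 O) in *.
    assert ((r O + 1)*(r O + 1) <= a * a) by (apply Rmult_le_compat; lra).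
    assert (0 <= (x2 - c2 O) * (x2 - c2 O)) by apply Rle_0_sqr.
    nra. }
  assert (HG0 : 0 <= mn psi n 0).
  { destruct (mn_ex psi n 0) as [l [Hl ->]]. unfold psi. replace (x1 + 0) with x1 by ring.
    specialize (Hx l Hl). lra. }
  assert (HGT : mn psi n T < 0).
  { apply Rle_lt_trans with (psi O T); [apply mn_le; lia | exact HT]. }
  assert (HTp : 0 <= T) by (unfold T; pose proof (Rabs_pos (x1 - c1 O)); pose proof (Hr O (Nat.le_0_l n)); lra).
  destruct (IVT_cor (mn psi n) 0 T (mn_cont psi n Hpc) HTp) as [t [_ Ht]].
  { nra. }
  set (p1 := x1 + t). set (p2 := x2).
  assert (HpK : forall l, (l <= n)%nat -> Q c1 c2 p1 p2 l <= r l * r l).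
  { intros l Hl. pose proof (mn_le psi n t l Hl). unfold p1, p2. unfold psi in *. lra. }
  destruct (mn_ex psi n t) as [k [Hk Hk2]].
  assert (Hpk : Q c1 c2 p1 p2 k = r k * r k) by (unfold p1, p2; unfold psi in *; lra).
  clear Hk2 Ht HG0 HGT HT.
  assert (Hrk := Hr k Hk).
  destruct (angle_ex ((p1 - c1 k)/r k) ((p2 - c2 k)/r k)) as [tp [Hcp Hsp]].
  { replace ((p1 - c1 k) / r k * ((p1 - c1 k) / r k) + (p2 - c2 k) / r k * ((p2 - c2 k) / r k))
     with (Q c1 c2 p1 p2 k / (r k * r k)) by (unfold Q; field; lra).
    rewrite Hpk. field. lra. }
  set (z1 := fun s => c1 k + r k * cos s). set (z2 := fun s => c2 k + r k * sin s).
  assert (Hzc : forall s, Q c1 c2 (z1 s) (z2 s) k = r k * r k).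
  { intros s. unfold Q, z1, z2. pose proof (sin2_cos2 s). unfold Rsqr in *. nra. }
  assert (Hzp1 : z1 tp = p1) by (unfold z1; rewrite Hcp; field; lra).
  assert (Hzp2 : z2 tp = p2) by (unfold z2; rewrite Hsp; field; lra).
  set (phi := fun l s => if Nat.eq_dec l k then 1 else r l * r l - Q c1 c2 (z1 s) (z2 s) l).
  assert (Hphc : forall l, continuity (phi l)).
  { intros l. unfold phi. destruct (Nat.eq_dec l k).
    - apply continuity_const. intros a b; reflexivity.
    - unfold Q, z1, z2; reg. }
  assert (Hphi0 : forall l s, (l <= n)%nat -> 0 <= phi l s -> Q c1 c2 (z1 s) (z2 s) l <= r l * r l).
  { intros l s Hl. unfold phi. destruct (Nat.eq_dec l k) as [->|]; [rewrite Hzc; lra| lra]. }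
  destruct (classic (exists s, mn phi n s < 0)) as [[s1 Hs1]|Hno].
  - right.
    assert (Hp0 : 0 <= mn phi n tp).
    { destruct (mn_ex phi n tp) as [l [Hl ->]]. unfold phi.
      destruct (Nat.eq_dec l k); [lra|]. rewrite Hzp1, Hzp2. specialize (HpK l Hl). lra. }
    assert (Hs : exists s, mn phi n s = 0).
    { destruct (Rle_lt_dec tp s1).
      - destruct (IVT_cor (mn phi n) tp s1 (mn_cont phi n Hphc) r0) as [s [_ Hs]].
        + nra.
        + exists s; exact Hs.
      - destruct (IVT_cor (mn phi n) s1 tp (mn_cont phi n Hphc) (Rlt_le _ _ r0)) as [s [_ Hs]].
        + nra.
        + exists s; exact Hs. }
    destruct Hs as [s Hs].
    destruct (mn_ex phi n s) as [l [Hl Hl2]]. rewrite Hs in Hl2.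
    assert (Hlk : k <> l).
    { intros <-. unfold phi in Hl2. destruct (Nat.eq_dec k k); [lra|congruence]. }
    exists k, l, (z1 s), (z2 s). repeat split; auto.
    + intros j Hj. apply Hphi0; auto. rewrite <- Hs. apply mn_le; auto.
    + unfold phi in Hl2. destruct (Nat.eq_dec l k); [congruence|]. lra.
  - left. exists k. split; auto. intros l Hl y1 y2 Hy.
    destruct (Nat.eq_dec l k) as [->|Hne]; auto.
    unfold Q in *. apply (contain (c1 k) (c2 k) (r k)); auto.
    intros s. apply (Hphi0 l s Hl).
    apply Rnot_lt_le. intros Hc. apply Hno. exists s.
    eapply Rle_lt_trans; [apply mn_le; exact Hl|exact Hc].
Qed.
Lemma norm_le_iff p r : 0 <= r -> (norm p <= r <-> fst p * fst p + snd p * snd p <= r * r).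
Proof.
  intros Hr. unfold norm.
  replace (fst p ^ 2 + snd p ^ 2) with (fst p * fst p + snd p * snd p) by ring.
  set (N := fst p * fst p + snd p * snd p).
  assert (HN : 0 <= N) by (unfold N; nra).
  split; intros H.
  - pose proof (sqrt_pos N). rewrite <- (sqrt_sqrt N HN). apply Rmult_le_compat; lra.
  - rewrite <- (sqrt_square r Hr). apply sqrt_le_1_alt; auto.
Qed.

Lemma norm_eq_iff p r : 0 <= r -> (norm p = r <-> fst p * fst p + snd p * snd p = r * r).
Proof.
  intros Hr. unfold norm.
  replace (fst p ^ 2 + snd p ^ 2) with (fst p * fst p + snd p * snd p) by ring.
  set (N := fst p * fst p + snd p * snd p).
  assert (HN : 0 <= N) by (unfold N; nra).
  split; intros H.
  - rewrite <- H. symmetry. apply sqrt_sqrt; auto.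
  - rewrite H. apply sqrt_square; auto.
Qed.

Lemma caseB (Di Dj : disk) v :
  on_circle v (center Di) (radius Di) -> on_circle v (center Dj) (radius Dj) ->
  is_dij Di Dj v \/ is_dij Dj Di v.
Proof.
  intros H1 H2.
  assert (Hm1 : boundaries_meet Di Dj) by (exists v; auto).
  assert (Hm2 : boundaries_meet Dj Di) by (exists v; auto).
  destruct Di as [[a1 a2] ri]; destruct Dj as [[b1 b2] rj]; destruct v as [v1 v2].
  unfold is_dij, inner, psub in *; simpl in *.
  destruct (Rle_or_lt 0 ((v1 - a1) * - (b2 - a2) + (v2 - a2) * (b1 - a1))).
  - left. left. repeat split; auto.
  - right. left. repeat split; auto. nra.
Qed.
Lemma sumsq0 a b : a*a + b*b = 0 -> a = 0 /\ b = 0.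
Proof.
  intros H. pose proof (Rle_0_sqr a); pose proof (Rle_0_sqr b); unfold Rsqr in *.
  assert (a*a = 0) by lra. assert (b*b = 0) by lra.
  split; [apply (Rmult_integral a a) in H2 | apply (Rmult_integral b b) in H3]; tauto.
Qed.

Lemma sumsq_ge0 a b : 0 <= a*a + b*b.
Proof. pose proof (Rle_0_sqr a); pose proof (Rle_0_sqr b); unfold Rsqr in *; lra. Qed.

Lemma caseA (Di Dj : disk) : 0 < radius Di -> 0 < radius Dj -> Di <> Dj ->
  (forall y, in_disk y Di -> in_disk y Dj) ->
  exists d, is_dij Di Dj d /\ in_disk d Di.
Proof.
  intros Hri Hrj Hne Hsub.
  destruct (classic (boundaries_meet Di Dj)) as [Hm|Hm].
  - destruct Hm as [x [Hx1 Hx2]].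
    destruct Di as [[a1 a2] ri]; destruct Dj as [[b1 b2] rj]; destruct x as [x1 x2].
    unfold is_dij, in_disk, on_circle, inner, psub in *; simpl in *.
    rewrite norm_eq_iff in Hx1, Hx2 by lra. simpl in Hx1, Hx2.
    set (A := (x1 - a1) * - (b2 - a2) + (x2 - a2) * (b1 - a1)).
    destruct (Rle_or_lt 0 A) as [HA|HA].
    + exists (x1, x2). split.
      * left. split; [exists (x1,x2); unfold on_circle, psub; simpl; rewrite !norm_eq_iff by lra; simpl; auto|].
        simpl. rewrite !norm_eq_iff by lra; simpl. repeat split; auto.
      * rewrite norm_le_iff by lra; simpl. lra.
    + set (N := (b2 - a2) * (b2 - a2) + (b1 - a1) * (b1 - a1)).
      assert (HN : 0 < N).
      { destruct (Req_dec N 0) as [H0|H0].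
        - destruct (sumsq0 _ _ H0) as [H H1].
          exfalso. unfold A in HA. rewrite H, H1 in HA. lra.
        - assert (0 <= N) by (unfold N; pose proof (Rle_0_sqr (b2-a2)); pose proof (Rle_0_sqr (b1-a1)); unfold Rsqr in *; lra). lra. }
      set (d1 := x1 - 2 * A / N * (- (b2 - a2))).
      set (d2 := x2 - 2 * A / N * (b1 - a1)).
      assert (Ea : (d1 - a1) * (d1 - a1) + (d2 - a2) * (d2 - a2) = ri * ri).
      { rewrite <- Hx1. unfold d1, d2, A. unfold N in HN |- *. field. lra. }
      assert (Eb : (d1 - b1) * (d1 - b1) + (d2 - b2) * (d2 - b2) = rj * rj).
      { rewrite <- Hx2. unfold d1, d2, A. unfold N in HN |- *. field. lra. }
      assert (Ei : (d1 - a1) * - (b2 - a2) + (d2 - a2) * (b1 - a1) = - A).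
      { unfold d1, d2, A. unfold N in HN |- *. field. lra. }
      exists (d1, d2). split.
      * left. split; [exists (x1,x2); unfold on_circle, psub; simpl; rewrite !norm_eq_iff by lra; simpl; auto|].
        simpl. rewrite !norm_eq_iff by lra; simpl. repeat split; auto. lra.
      * rewrite norm_le_iff by lra; simpl. lra.
  - destruct Di as [[a1 a2] ri]; destruct Dj as [[b1 b2] rj].
    unfold is_dij, in_disk, on_circle, inner, psub in *; simpl in *.
    set (N := (a1 - b1) * (a1 - b1) + (a2 - b2) * (a2 - b2)).
    assert (HN : 0 <= N) by apply sumsq_ge0.
    set (dl := sqrt N).
    assert (Hdl : 0 <= dl) by apply sqrt_pos.
    assert (Hdl2 : dl * dl = N) by (apply sqrt_sqrt; auto).
    assert (Hb : dl + ri <= rj /\ ri < rj).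
    { destruct (Req_dec N 0) as [HN0|HN0].
      - assert (dl = 0) by (unfold dl; rewrite HN0; apply sqrt_0).
        destruct (sumsq0 _ _ HN0) as [E1 E2].
        assert (a1 = b1) by lra.
        assert (a2 = b2) by lra.
        specialize (Hsub (a1 + ri, a2)).
        rewrite !norm_le_iff in Hsub by lra. simpl in Hsub.
        assert (ri * ri <= rj * rj).
        { subst. replace ((b1 + ri - b1) * (b1 + ri - b1) + (b2 - b2) * (b2 - b2)) with (ri*ri) in Hsub by ring. apply Hsub. lra. }
        assert (ri <= rj) by nra.
        destruct (Req_dec ri rj); [|lra].
        exfalso. apply Hne. subst. reflexivity.
      - assert (Hdp : 0 < dl) by (unfold dl; apply sqrt_lt_R0; lra).
        specialize (Hsub (a1 + ri * (a1 - b1) / dl, a2 + ri * (a2 - b2) / dl)).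
        rewrite !norm_le_iff in Hsub by lra. simpl in Hsub.
        assert (H1 : (a1 + ri * (a1 - b1) / dl - a1) * (a1 + ri * (a1 - b1) / dl - a1) +
          (a2 + ri * (a2 - b2) / dl - a2) * (a2 + ri * (a2 - b2) / dl - a2) <= ri * ri).
        { replace ((a1 + ri * (a1 - b1) / dl - a1) * (a1 + ri * (a1 - b1) / dl - a1) +
          (a2 + ri * (a2 - b2) / dl - a2) * (a2 + ri * (a2 - b2) / dl - a2)) with (ri*ri*N/(dl*dl))
          by (unfold N; field; lra). rewrite <- Hdl2. right. field. lra. }
        specialize (Hsub H1).
        replace ((a1 + ri * (a1 - b1) / dl - b1) * (a1 + ri * (a1 - b1) / dl - b1) +
          (a2 + ri * (a2 - b2) / dl - b2) * (a2 + ri * (a2 - b2) / dl - b2)) with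
          (N * ((dl + ri) * (dl + ri)) / (dl * dl)) in Hsub by (unfold N; field; lra).
        rewrite <- Hdl2 in Hsub.
        replace (dl * dl * ((dl + ri) * (dl + ri)) / (dl * dl)) with ((dl + ri) * (dl + ri)) in Hsub by (field; lra).
        nra. }
    destruct Hb as [Hb1 Hb2].
    set (lam := dl / (rj - ri)).
    assert (Hlam : norm (a1 - b1, a2 - b2) / Rabs (ri - rj) = lam).
    { unfold lam, norm. cbn [fst snd].
      replace ((a1 - b1) ^ 2 + (a2 - b2) ^ 2) with N by (unfold N; ring).
      rewrite Rabs_left by lra. fold dl. replace (- (ri - rj)) with (rj - ri) by ring. reflexivity. }
    assert (Hl0 : 0 <= lam) by (unfold lam; unfold Rdiv; apply Rmult_le_pos; [lra|apply Rlt_le, Rinv_0_lt_compat; lra]).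
    assert (Hl1 : lam <= 1) by (unfold lam; apply (Rmult_le_reg_r (rj - ri)); [lra|]; field_simplify; lra).
    set (k := ri / (ri - rj)).
    exists (a1 + k * (b1 - a1), a2 + k * (b2 - a2)). split.
    + right. split; [exact Hm|]. simpl. rewrite Hlam.
      rewrite !norm_eq_iff by nra. simpl. split.
      * replace ((a1 + k * (b1 - a1) - a1) * (a1 + k * (b1 - a1) - a1) +
          (a2 + k * (b2 - a2) - a2) * (a2 + k * (b2 - a2) - a2)) with (k * k * N) by (unfold N; ring).
        rewrite <- Hdl2. unfold k, lam. field. lra.
      * replace ((a1 + k * (b1 - a1) - b1) * (a1 + k * (b1 - a1) - b1) +
          (a2 + k * (b2 - a2) - b2) * (a2 + k * (b2 - a2) - b2)) with ((k - 1) * (k - 1) * N) by (unfold N; ring).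
        rewrite <- Hdl2. unfold k, lam. field. lra.
    + rewrite norm_le_iff by lra. simpl.
      replace ((a1 + k * (b1 - a1) - a1) * (a1 + k * (b1 - a1) - a1) +
          (a2 + k * (b2 - a2) - a2) * (a2 + k * (b2 - a2) - a2)) with ((lam * ri) * (lam * ri)).
      * assert (0 <= lam * ri <= ri) by (split; nra). nra.
      * replace ((a1 + k * (b1 - a1) - a1) * (a1 + k * (b1 - a1) - a1) +
          (a2 + k * (b2 - a2) - a2) * (a2 + k * (b2 - a2) - a2)) with (k * k * N) by (unfold N; ring).
        rewrite <- Hdl2. unfold k, lam. field. lra.
Qed.

Lemma in_disk_conv y Dk : 0 <= radius Dk -> (in_disk y Dk <->
  (fst y - fst (center Dk))*(fst y - fst (center Dk)) + (snd y - snd (center Dk))*(snd y - snd (center Dk)) <= radius Dk * radius Dk).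
Proof. intros H. unfold in_disk. rewrite norm_le_iff by exact H. simpl. tauto. Qed.

Lemma on_circle_conv y c r : 0 <= r -> (on_circle y c r <->
  (fst y - fst c)*(fst y - fst c) + (snd y - snd c)*(snd y - snd c) = r * r).
Proof. intros H. unfold on_circle. rewrite norm_eq_iff by exact H. simpl. tauto. Qed.

Theorem lemma4p1 (m : nat) (D : nat -> disk) :
  (2 <= m)%nat ->
  (forall k, (k < m)%nat -> 0 < radius (D k)) ->
  (forall i j, (i < m)%nat -> (j < m)%nat -> i <> j -> D i <> D j) ->
  ((exists x, forall k, (k < m)%nat -> in_disk x (D k)) <->
   exists i j, (i < m)%nat /\ (j < m)%nat /\ i <> j /\
     (exists x, in_disk x (D i) /\ in_disk x (D j)) /\
     exists d, is_dij (D i) (D j) d /\ forall k, (k < m)%nat -> in_disk d (D k)).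
Proof.
  intros Hm Hr Hd. split.
  - intros [x Hx].
    set (n := (m - 1)%nat).
    set (c1 := fun k => fst (center (D k))).
    set (c2 := fun k => snd (center (D k))).
    set (r := fun k => radius (D k)).
    destruct (SL n c1 c2 r) as [[k [Hk Hsub]] | [k [l [v1 [v2 [Hk [Hl [Hkl [HvK [Hvk Hvl]]]]]]]]]].
    + intros l Hl. apply Hr. unfold n in Hl. lia.
    + exists (fst x), (snd x). intros l Hl.
      assert (Hl' : (l < m)%nat) by (unfold n in Hl; lia).
      specialize (Hx l Hl'). rewrite in_disk_conv in Hx by (apply Rlt_le, Hr; auto).
      exact Hx.
    + assert (Hk' : (k < m)%nat) by (unfold n in Hk; lia).
      set (j := if Nat.eq_dec k 0 then 1%nat else 0%nat).
      assert (Hj : (j < m)%nat) by (unfold j; destruct (Nat.eq_dec k 0); lia).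
      assert (Hjk : k <> j) by (unfold j; destruct (Nat.eq_dec k 0); lia).
      assert (Hall : forall l, (l < m)%nat -> forall y, in_disk y (D k) -> in_disk y (D l)).
      { intros l Hl y Hy.
        rewrite in_disk_conv in Hy |- * by (apply Rlt_le, Hr; auto).
        apply (Hsub l ltac:(unfold n; lia) (fst y) (snd y)). exact Hy. }
      destruct (caseA (D k) (D j) (Hr k Hk') (Hr j Hj) (Hd k j Hk' Hj Hjk) (Hall j Hj)) as [d [Hd1 Hd2]].
      exists k, j. repeat split; auto.
      * exists x. split; apply Hx; auto.
      * exists d. split; auto.
    + assert (Hk' : (k < m)%nat) by (unfold n in Hk; lia).
      assert (Hl' : (l < m)%nat) by (unfold n in Hl; lia).
      assert (HvA : forall j, (j < m)%nat -> in_disk (v1, v2) (D j)).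
      { intros j Hj. rewrite in_disk_conv by (apply Rlt_le, Hr; auto).
        apply (HvK j ltac:(unfold n; lia)). }
      assert (C1 : on_circle (v1, v2) (center (D k)) (radius (D k))).
      { rewrite on_circle_conv by (apply Rlt_le, Hr; auto). exact Hvk. }
      assert (C2 : on_circle (v1, v2) (center (D l)) (radius (D l))).
      { rewrite on_circle_conv by (apply Rlt_le, Hr; auto). exact Hvl. }
      destruct (caseB (D k) (D l) (v1, v2) C1 C2) as [H|H].
      * exists k, l. repeat split; auto.
        -- exists (v1, v2). split; auto.
        -- exists (v1, v2). split; auto.
      * exists l, k. repeat split; auto.
        -- exists (v1, v2). split; auto.
        -- exists (v1, v2). split; auto.
  - intros [i [j [_ [_ [_ [_ [d [_ Hd']]]]]]]]. exists d. exact Hd'.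
Qed.
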